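(* Let $K$ be a field of characteristic $p>0$ such that $K/k$ is a finitely generated field extension, where $k=\bigcap_{n\ge0}K^{p^n}$. If $K\neq k$, then $\operatorname{Diff}_k(K)$ is not finitely generated as a $K$-algebra.
   Context: $\operatorname{Diff}_k(K)$ is the union over $n\ge0$ of the sets of $k$-linear maps $D:K\to K$ with $[b_0,[b_1,[\ldots,[b_n,D]\ldots]]]=0$ for all $b_i\in K$ (elements acting by multiplication, $[X,Y]=XY-YX$); it is a ring under composition containing $K$. *)

(* Defs.v *)
From HB Require Import structures.
From mathcomp Require Import all_boot all_order all_algebra.
Set Implicit Arguments. Unset Strict Implicit. Unset Printing Implicit Defensive.
Import GRing.Theory.
Local Open Scope ring_scope.

Section DiffOps.
Variable K : fieldType.

Definition perfect_core (p : nat) : K -> Prop :=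
  fun x => forall n : nat, exists y : K, y ^+ (p ^ n) = x.

Inductive field_gen (k : K -> Prop) (xs : seq K) : K -> Prop :=
| fg_base x : k x -> field_gen k xs x
| fg_gen x : x \in xs -> field_gen k xs x
| fg_add x y : field_gen k xs x -> field_gen k xs y -> field_gen k xs (x + y)
| fg_opp x : field_gen k xs x -> field_gen k xs (- x)
| fg_mul x y : field_gen k xs x -> field_gen k xs y -> field_gen k xs (x * y)
| fg_inv x : field_gen k xs x -> field_gen k xs (x^-1).

Definition fin_gen_ext (k : K -> Prop) : Prop :=
  exists xs : seq K, forall x : K, field_gen k xs x.

Definition klinear (k : K -> Prop) (D : K -> K) : Prop :=
  (forall x y, D (x + y) = D x + D y) /\
  (forall c x, k c -> D (c * x) = c * D x).

Definition commK (b : K) (D : K -> K) : K -> K := fun x => b * D x - D (b * x).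

Definition diff_order (n : nat) (D : K -> K) : Prop :=
  forall bs : seq K, size bs = n.+1 -> forall x, foldr commK D bs x = 0.

Definition is_diffop (k : K -> Prop) (D : K -> K) : Prop :=
  klinear k D /\ exists n, diff_order n D.

(* K-subalgebra of End(K) generated by K (acting by multiplication) and
   the maps in gens: closure under +, composition *)
Inductive alg_gen (m : nat) (gens : 'I_m -> K -> K) : (K -> K) -> Prop :=
| ag_scal (b : K) : alg_gen gens (fun x => b * x)
| ag_gen i : alg_gen gens (gens i)
| ag_add D E : alg_gen gens D -> alg_gen gens E -> alg_gen gens (fun x => D x + E x)
| ag_comp D E : alg_gen gens D -> alg_gen gens E -> alg_gen gens (fun x => D (E x)).

Definition diff_fin_gen (k : K -> Prop) : Prop :=
  exists (m : nat) (gens : 'I_m -> K -> K),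
    (forall i, is_diffop k (gens i)) /\
    (forall D, is_diffop k D -> exists E, alg_gen gens E /\ E =1 D).

End DiffOps.

(* Main.v *)
Require Import Defs.
From HB Require Import structures.
From mathcomp Require Import all_boot all_order all_algebra.
From mathcomp Require Import ring.
From Stdlib Require Import Classical ClassicalEpsilon.
Set Implicit Arguments. Unset Strict Implicit. Unset Printing Implicit Defensive.
Import GRing.Theory.
Local Open Scope ring_scope.

Section Comm.
Variable K : fieldType.
Implicit Types (F G D : K -> K) (a b c y x : K) (P Q R : {poly K}).

Lemma commK_ext b F G : F =1 G -> commK b F =1 commK b G.
Proof. by move=> e x; rewrite /commK !e. Qed.

Lemma foldr_ext F G l : F =1 G -> foldr (@commK K) F l =1 foldr (@commK K) G l.
Proof. by elim: l => //= b l IH e; apply: commK_ext; apply: IH. Qed.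

Lemma commK_comm a b F : commK a (commK b F) =1 commK b (commK a F).
Proof. move=> x; rewrite /commK [b * (a * x)]mulrCA; ring. Qed.

Lemma foldr_comm b F l :
  foldr (@commK K) (commK b F) l =1 commK b (foldr (@commK K) F l).
Proof.
elim: l => //= a l IH x.
rewrite (commK_ext _ IH) commK_comm //.
Qed.

Lemma foldr_add F G l :
  foldr (@commK K) (fun x => F x + G x) l =1
  (fun x => foldr (@commK K) F l x + foldr (@commK K) G l x).
Proof.
elim: l => //= a l IH x; rewrite (commK_ext _ IH) /commK; ring.
Qed.

Lemma foldr_lmul a F l :
  foldr (@commK K) (fun x => a * F x) l =1
  (fun x => a * foldr (@commK K) F l x).
Proof.
elim: l => //= b l IH x; rewrite (commK_ext _ IH) /commK; ring.
Qed.

Lemma foldr_rcomp a F l :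
  foldr (@commK K) (fun x => F (a * x)) l =1
  (fun x => foldr (@commK K) F l (a * x)).
Proof.
elim: l => //= b l IH x; rewrite (commK_ext _ IH) /commK mulrCA //.
Qed.

Lemma foldr_zero F l : F =1 (fun _ => 0) -> foldr (@commK K) F l =1 (fun _ => 0).
Proof.
move=> e; elim: l => //= b l IH x; rewrite (commK_ext _ IH) /commK; ring.
Qed.

Lemma foldr_filter (T : Type) (f : T -> K) (P : pred T) F (l : seq T) :
  foldr (@commK K) F (map f l) =1
  foldr (@commK K) (foldr (@commK K) F (map f (filter P l))) (map f (filter (predC P) l)).
Proof.
elim: l => //= t l IH x; case: (P t) => /=.
- rewrite (commK_ext _ IH) -foldr_comm //.
- by apply: commK_ext.
Qed.

Definition Psi (D : K -> K) (y : K) (P : {poly K}) (x : K) :=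
  \sum_(k < size P) P`_k * D (y ^+ k * x).

Lemma Psi_bound D y P n x : (size P <= n)%N ->
  Psi D y P x = \sum_(k < n) P`_k * D (y ^+ k * x).
Proof.
move=> le; rewrite /Psi (big_ord_widen n (fun k => P`_k * D (y ^+ k * x)) le).
rewrite big_mkcond /=; apply: eq_bigr => i _.
case: ifP => // /negbT; rewrite -leqNgt => h; rewrite nth_default // mul0r //.
Qed.

Lemma Psi_add D y P Q x : Psi D y (P + Q) x = Psi D y P x + Psi D y Q x.
Proof.
pose n := maxn (size P) (size Q).
rewrite !(@Psi_bound _ _ _ n) ?leq_maxl ?leq_maxr //; last first.
  by apply: leq_trans (size_add _ _) _.
by rewrite -big_split /=; apply: eq_bigr => i _; rewrite coefD mulrDl.
Qed.

Lemma Psi_opp D y P x : Psi D y (- P) x = - Psi D y P x.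
Proof.
rewrite /Psi size_polyN -sumrN; apply: eq_bigr => i _; rewrite coefN mulNr //.
Qed.

Lemma Psi_scale D y c P x : Psi D y (c *: P) x = c * Psi D y P x.
Proof.
rewrite (@Psi_bound _ _ _ (size P)); last exact: size_scale_leq.
rewrite /Psi mulr_sumr.
by apply: eq_bigr => i _; rewrite coefZ mulrA.
Qed.

Lemma Psi_mulX D y (a : nat) P x : Psi D y ('X^a * P) x = Psi D y P (y ^+ a * x).
Proof.
rewrite (@Psi_bound _ _ _ (a + size P)); last first.
  apply: leq_trans (size_polyMleq _ _) _; rewrite size_polyXn //.
rewrite big_split_ord /= big1 ?add0r; last first.
  by move=> i _; rewrite coefXnM /= ltn_ord mul0r.
apply: eq_bigr => i _; rewrite coefXnM /= ltnNge leq_addr /= addKn.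
by rewrite exprD -mulrA mulrCA.
Qed.

Lemma Psi_fact D y c (a : nat) P x :
  Psi D y ((c%:P - 'X^a) * P) x = c * Psi D y P x - Psi D y P (y ^+ a * x).
Proof.
by rewrite mulrBl Psi_add Psi_opp mul_polyC Psi_scale Psi_mulX.
Qed.

Lemma Psi_one D y x : Psi D y 1 x = D x.
Proof. by rewrite /Psi size_poly1 big_ord1 coefC /= expr0 !mul1r. Qed.

Lemma commK_Psi D y (a : nat) P :
  commK (y ^+ a) (Psi D y P) =1 Psi D y (((y ^+ a)%:P - 'X^a) * P).
Proof. by move=> x; rewrite Psi_fact. Qed.

Lemma foldr_Psi D y (l : seq nat) :
  foldr (@commK K) D (map (fun n => y ^+ n) l) =1
  Psi D y (\prod_(n <- l) ((y ^+ n)%:P - 'X^n)).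
Proof.
elim: l => [|n l IH] x /=; first by rewrite big_nil Psi_one.
rewrite (commK_ext _ IH) commK_Psi big_cons //.
Qed.

End Comm.


Section CharP.
Variable K : fieldType.
Variable p : nat.
Hypothesis hp : p \in [pchar K].
Implicit Types (F G D : K -> K) (b c y x : K) (P R : {poly K}).

Lemma pnat_pe (T : nzRingType) (e : nat) : p \in [pchar T] -> (GRing.pchar T).-nat (p ^ e)%N.
Proof.
move=> hT; rewrite (eq_pnat _ (pcharf_eq hT)) pnatX pnat_id //.
exact: pcharf_prime hT.
Qed.

Lemma hpP : p \in [pchar {poly K}].
Proof. by rewrite pchar_poly. Qed.

Lemma frobB (T : comNzRingType) (e : nat) (A B : T) : p \in [pchar T] ->
  (A - B) ^+ (p ^ e) = A ^+ (p ^ e) - B ^+ (p ^ e).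
Proof.
move=> hT; rewrite exprDn_pchar ?exprNn_pchar //; exact: pnat_pe.
Qed.

Lemma frobD (T : comNzRingType) (e : nat) (A B : T) : p \in [pchar T] ->
  (A + B) ^+ (p ^ e) = A ^+ (p ^ e) + B ^+ (p ^ e).
Proof. move=> hT; rewrite exprDn_pchar //; exact: pnat_pe. Qed.

Lemma frobN (T : comNzRingType) (e : nat) (A : T) : p \in [pchar T] ->
  (- A) ^+ (p ^ e) = - A ^+ (p ^ e).
Proof. move=> hT; rewrite exprNn_pchar //; exact: pnat_pe. Qed.

Lemma prod_fact y (l : seq nat) : exists R,
  \prod_(n <- l) ((y ^+ n)%:P - 'X^n) = (y%:P - 'X) ^+ size l * R.
Proof.
elim: l => [|n l [R IH]]; first by exists 1; rewrite big_nil expr0 mulr1.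
rewrite big_cons IH polyC_exp subrXX.
set S := \sum_(i < n) _.
exists (S * R); rewrite /= exprS.
by rewrite -!mulrA; congr (_ * _); rewrite mulrCA.
Qed.

Lemma uni_vanish D y e (l : seq nat) : size l = (p ^ e)%N ->
  (forall z, D (y ^+ (p ^ e) * z) = y ^+ (p ^ e) * D z) ->
  foldr (@commK K) D (map (fun n => y ^+ n) l) =1 (fun _ => 0).
Proof.
move=> sl lin x; rewrite foldr_Psi.
have [R ->] := prod_fact y l.
rewrite sl (frobB _ _ _ hpP) -polyC_exp Psi_fact.
suff -> : Psi D y R (y ^+ (p ^ e) * x) = y ^+ (p ^ e) * Psi D y R x by rewrite subrr.
rewrite /Psi mulr_sumr; apply: eq_bigr => i _.
by rewrite mulrCA lin mulrCA.
Qed.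

Lemma prod_nseq y m :
  \prod_(n <- nseq m 1%N) ((y ^+ n)%:P - 'X^n) = (y%:P - 'X) ^+ m.
Proof.
elim: m => [|m IH]; first by rewrite big_nil expr0.
by rewrite /= big_cons IH !expr1 exprS.
Qed.

Lemma lin_of_order D n e : diff_order n D -> (n < p ^ e)%N ->
  forall b x, D (b ^+ (p ^ e) * x) = b ^+ (p ^ e) * D x.
Proof.
move=> ho lt b x.
have h0 : foldr (@commK K) D (nseq (p ^ e) b) x = 0.
  rewrite -(subnK lt) nseqD foldr_cat.
  apply: foldr_zero => z; apply: ho; by rewrite size_nseq.
have : nseq (p ^ e) b = map (fun n => b ^+ n) (nseq (p ^ e) 1%N).
  by rewrite map_nseq expr1.
move=> eq; move: h0; rewrite eq foldr_Psi prod_nseq (frobB _ _ _ hpP) -polyC_exp.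
rewrite -(mulr1 (_ - _)) Psi_fact !Psi_one => /eqP; rewrite subr_eq0 => /eqP.
by [].
Qed.

End CharP.


Section Order.
Variable K : fieldType.
Variable p : nat.
Hypothesis hp : p \in [pchar K].
Variable e : nat.
Local Notation Q := (p ^ e)%N.
Variable xs : seq K.
Local Notation r := (size xs).
Implicit Types (F G D E : K -> K) (b c y x : K).

Definition LL (c : K) := exists z, c = z ^+ Q.

Definition Lin E := (forall x y, E (x + y) = E x + E y) /\
  (forall z x, E (z ^+ Q * x) = z ^+ Q * E x).

Definition mv (m : nat * nat) : K := xs`_(m.1) ^+ m.2.
Definition cnt i (P : seq (nat * nat)) := count (fun m : nat * nat => m.1 == i) P.
Definition tot (P : seq (nat * nat)) := count (fun m : nat * nat => m.1 < r)%N P.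
Definition N0 := (r * (Q - 1)).+1.
Definition qual n P := (exists i, (i < r)%N /\ (Q <= cnt i P)%N) \/ (N0 <= n + tot P)%N.
Definition Kill n E := forall P, qual n P -> foldr (@commK K) E (map mv P) =1 (fun _ => 0).

Lemma Kill_ext n E E' : E =1 E' -> Kill n E -> Kill n E'.
Proof.
move=> ee k P q x; rewrite -(foldr_ext _ ee); exact: k.
Qed.

Lemma Kill_add n E E' : Kill n E -> Kill n E' -> Kill n (fun x => E x + E' x).
Proof. by move=> k k' P q x; rewrite foldr_add k // k' // addr0. Qed.

Lemma Kill_lmul n a E : Kill n E -> Kill n (fun x => a * E x).
Proof. by move=> k P q x; rewrite foldr_lmul k // mulr0. Qed.

Lemma Kill_rcomp n a E : Kill n E -> Kill n (fun x => E (a * x)).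
Proof. by move=> k P q x; rewrite foldr_rcomp k. Qed.

Lemma Kill_zero n E : E =1 (fun _ => 0) -> Kill n E.
Proof. by move=> z P q; apply: foldr_zero. Qed.

Lemma Kill_mv n E i a : Kill n E -> (i < r)%N -> Kill n.+1 (commK (xs`_i ^+ a) E).
Proof.
move=> k ir P q x; rewrite foldr_comm.
have := k ((i, a) :: P); rewrite /= /mv /=; apply.
case: q => [[j [jr hj]] | h]; [left; exists j; split => //| right].
  by apply: leq_trans hj _; rewrite /cnt /= leq_addl.
by rewrite /tot /= ir addnCA add1n.
Qed.

Definition mono (f : 'I_r -> nat) := \prod_(i < r) xs`_i ^+ f i.

Lemma commK_mul a b E : commK (a * b) E =1 (fun x => a * commK b E x + commK a E (b * x)).
Proof. move=> x; rewrite /commK /= -[a * b * x]mulrA; ring. Qed.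

Lemma Kill_mono n E f : Kill n E -> Kill n.+1 (commK (mono f) E).
Proof.
move=> k; rewrite /mono.
apply: (big_ind (fun a => Kill n.+1 (commK a E))).
- by apply: Kill_zero => x; rewrite /commK !mul1r subrr.
- move=> a b ka kb; apply: Kill_ext; first by move=> x; rewrite commK_mul.
  apply: Kill_add; first exact: Kill_lmul.
  exact: Kill_rcomp.
- by move=> i _; apply: Kill_mv.
Qed.

Inductive InSpan : K -> Prop :=
| sp_mono c f : LL c -> InSpan (c * mono f)
| sp_add a b : InSpan a -> InSpan b -> InSpan (a + b).

Lemma Lin_commK b E : Lin E -> Lin (commK b E).
Proof.
move=> [ad li]; split => [x y|z x]; rewrite /commK.
  by rewrite [b * (x + y)]mulrDr !ad; ring.
by rewrite li [b * (z ^+ Q * x)]mulrCA li; ring.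
Qed.

Lemma Kill_step n E b : Lin E -> Kill n E -> InSpan b -> Kill n.+1 (commK b E).
Proof.
move=> [ad li] k; elim=> [c f [z ->]| a b' _ ka _ kb].
  apply: Kill_ext (Kill_lmul (z ^+ Q) (Kill_mono f k)).
  by move=> x; rewrite /commK /= -[z ^+ Q * _ * x]mulrA li; ring.
apply: Kill_ext (Kill_add ka kb).
by move=> x; rewrite /commK /= [(a + b') * x]mulrDl ad; ring.
Qed.

Lemma tot_sum (r' : nat) P : count (fun m : nat * nat => m.1 < r')%N P = (\sum_(i < r') cnt i P)%N.
Proof.
elim: r' => [|r' IH]; first by rewrite big_ord0; apply/eqP; rewrite -leqn0 leqNgt -has_count; apply/hasP => [[]].
rewrite big_ord_recr /= -IH /cnt -count_predUI.
rewrite (@eq_count _ (predI _ _) pred0); last by move=> m /=; case: ltngtP.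
rewrite count_pred0 addn0; apply: eq_count => m /=; by rewrite ltnS leq_eqVlt orbC.
Qed.

Lemma pigeon P : (N0 <= tot P)%N -> exists i, (i < r)%N /\ (Q <= cnt i P)%N.
Proof.
move=> h; case: (boolP [exists i : 'I_r, Q <= cnt i P]%N) => [/existsP [i hi]|/existsPn nh].
  by exists i.
exfalso; move: h; rewrite /tot tot_sum /N0 ltnNge => /negP; apply.
have -> : (r * (Q - 1) = \sum_(i < r) (Q - 1))%N by rewrite sum_nat_const card_ord.
apply: leq_sum => i _; have := nh i; rewrite -ltnNge => lt.
by rewrite -ltnS (leq_trans lt) // subn1 leqSpred.
Qed.

Lemma Kill_base E : Lin E -> Kill 0 E.
Proof.
move=> [ad li] P q.
have [i [ir hi]] : exists i, (i < r)%N /\ (Q <= cnt i P)%N.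
  by case: q => // h; apply: pigeon.
move=> x; rewrite (foldr_filter _ (fun m : nat * nat => m.1 == i)).
apply: foldr_zero => {}x.
set l := filter _ P.
have sl : size l = cnt i P by rewrite size_filter.
rewrite -(cat_take_drop (size l - Q) l) map_cat foldr_cat.
apply: foldr_zero => {}x.
have -> : map mv (drop (size l - Q) l) =
          map (fun n => xs`_i ^+ n) (map snd (drop (size l - Q) l)).
  rewrite -map_comp; apply/eq_in_map => m /mem_drop.
  by rewrite mem_filter => /andP [/eqP <- _].
apply: (uni_vanish hp) => //.
by rewrite size_map size_drop subKn // sl.
Qed.

Lemma Kill_fold D : Lin D -> (forall z, InSpan z) ->
  forall bs, Kill (size bs) (foldr (@commK K) D bs) /\ Lin (foldr (@commK K) D bs).
Proof.
move=> lD all; elim=> [|b bs [k l]] /=; first by split => //; apply: Kill_base.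
split; [exact: Kill_step | exact: Lin_commK].
Qed.

Lemma order_bound D : Lin D -> (forall z, InSpan z) -> diff_order (r * (Q - 1)) D.
Proof.
move=> lD all bs sb x.
have [k _] := Kill_fold lD all bs.
have := k [::]; rewrite /=; apply => //.
by right; rewrite sb /N0 addn0.
Qed.

End Order.


Section Span.
Variable K : fieldType.
Variable p : nat.
Hypothesis hp : p \in [pchar K].
Variable e : nat.
Local Notation Q := (p ^ e)%N.
Local Notation LL := (@LL K p e).
Implicit Types (F G D E : K -> K) (a b c y x z w : K).

Lemma Q_gt0 : (0 < Q)%N.
Proof. by rewrite expn_gt0 prime_gt0 // (pcharf_prime hp). Qed.

Lemma LL0 : LL 0. Proof. by exists 0; rewrite expr0n eqn0Ngt Q_gt0. Qed.
Lemma LL1 : LL 1. Proof. by exists 1; rewrite expr1n. Qed.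
Lemma LLD a b : LL a -> LL b -> LL (a + b).
Proof. by move=> [u ->] [v ->]; exists (u + v); rewrite (frobD _ _ _ hp). Qed.
Lemma LLN a : LL a -> LL (- a).
Proof. by move=> [u ->]; exists (- u); rewrite (frobN _ _ hp). Qed.
Lemma LLM a b : LL a -> LL b -> LL (a * b).
Proof. by move=> [u ->] [v ->]; exists (u * v); rewrite exprMn. Qed.
Lemma LLV a : LL a -> LL (a^-1).
Proof. by move=> [u ->]; exists (u^-1); rewrite exprVn. Qed.

Fixpoint Sp (l : seq K) (z : K) : Prop :=
  match l with
  | [::] => z = 0
  | m :: l' => exists c s, LL c /\ Sp l' s /\ z = c * m + s
  end.

Lemma Sp0 l : Sp l 0.
Proof. elim: l => //= m l IH; exists 0, 0; split; [exact: LL0|split=> //]; by rewrite mul0r addr0. Qed.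

Lemma SpD l z w : Sp l z -> Sp l w -> Sp l (z + w).
Proof.
elim: l z w => [|m l IH] z w /=; first by move=> -> ->; rewrite addr0.
move=> [c [s [hc [hs ->]]]] [c' [s' [hc' [hs' ->]]]].
exists (c + c'), (s + s'); split; first exact: LLD.
split; first exact: IH.
by rewrite mulrDl; ring.
Qed.

Lemma SpZ l a z : LL a -> Sp l z -> Sp l (a * z).
Proof.
move=> ha; elim: l z => [|m l IH] z /=; first by move=> ->; rewrite mulr0.
move=> [c [s [hc [hs ->]]]]; exists (a * c), (a * s); split; first exact: LLM.
split; first exact: IH.
by rewrite mulrDr mulrA.
Qed.

Lemma SpN l z : Sp l z -> Sp l (- z).
Proof. move=> h; rewrite -mulN1r; apply: SpZ h; apply: LLN; exact: LL1. Qed.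

Lemma Sp_mem l m c : m \in l -> LL c -> Sp l (c * m).
Proof.
elim: l => //= m' l IH; rewrite in_cons => /orP [/eqP ->|h] hc.
  by exists c, 0; split => //; split; [exact: Sp0| rewrite addr0].
exists 0, (c * m); split; first exact: LL0.
by split; [exact: IH | rewrite mul0r add0r].
Qed.

Lemma Sp_cat l l' z : Sp l z -> Sp (l ++ l') z.
Proof.
elim: l z => [|m l IH] z /=; first by move=> ->; exact: Sp0.
by move=> [c [s [hc [hs ->]]]]; exists c, s; split => //; split => //; apply: IH.
Qed.

Lemma Sp_pre l l' z : Sp l' z -> Sp (l ++ l') z.
Proof.
elim: l => //= m l IH h; exists 0, z; split; first exact: LL0.
by split; [exact: IH| rewrite mul0r add0r].
Qed.

Definition LinOn (S : K -> Prop) (g : K -> K) :=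
  (forall z w, S z -> S w -> g (z + w) = g z + g w) /\
  (forall c z, LL c -> S z -> g (c * z) = c * g z).

Lemma Sp_uniq l m c c' s s' : ~ Sp l m -> LL c -> LL c' -> Sp l s -> Sp l s' ->
  c * m + s = c' * m + s' -> s = s'.
Proof.
move=> nm hc hc' hs hs' eq.
case: (eqVneq c c') => [ec|nc].
  by move: eq; rewrite ec => /addrI.
exfalso; apply: nm.
have -> : m = (c - c')^-1 * (s' - s).
  apply: (@mulfI _ (c - c')); first by rewrite subr_eq0.
  rewrite mulrA divrr ?unitfE ?subr_eq0 // mul1r.
  by rewrite mulrBl -[c * m](addrK s) eq; ring.
apply: SpZ; first by apply: LLV; apply: LLD hc (LLN hc').
by apply: SpD hs' (SpN hs).
Qed.

Lemma ext_step l g m : LinOn (Sp l) g -> exists g',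
  LinOn (Sp (m :: l)) g' /\ (forall z, Sp l z -> g' z = g z) /\ (~ Sp l m -> g' m = 0).
Proof.
move=> [gad gsc].
case: (classic (Sp l m)) => hm.
  exists g; split; last by split.
  have sub : forall z, Sp (m :: l) z -> Sp l z.
    by move=> z [c [s [hc [hs ->]]]]; exact: SpD (SpZ hc hm) hs.
  split => [z w /sub hz /sub hw|c z hc /sub hz]; [exact: gad| exact: gsc].
pose eps z := epsilon (inhabits 0) (fun s => exists c, LL c /\ Sp l s /\ z = c * m + s).
have epsP : forall z c s, LL c -> Sp l s -> z = c * m + s -> eps z = s.
  move=> z c s hc hs hz.
  have ex : exists s, (exists c, LL c /\ Sp l s /\ z = c * m + s) by exists s, c.
  have [c' [hc' [hs' hz']]] := epsilon_spec (inhabits 0) _ ex.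
  apply: (Sp_uniq hm hc' hc hs' hs); by rewrite -hz' -hz.
have g0 : g 0 = 0.
  have := gad 0 0 (Sp0 l) (Sp0 l); rewrite addr0 => h.
  by apply: (@addrI _ (g 0)); rewrite -h addr0.
exists (fun z => g (eps z)); split; [split|split].
- move=> z w [c [s [hc [hs ->]]]] [c' [s' [hc' [hs' ->]]]].
  rewrite (epsP (c * m + s) c s) // (epsP (c' * m + s') c' s') // (epsP _ (c + c') (s + s')) //.
  + exact: gad.
  + exact: LLD.
  + exact: SpD.
  + by rewrite mulrDl; ring.
- move=> a z ha [c [s [hc [hs ->]]]].
  rewrite (epsP (c * m + s) c s) // (epsP _ (a * c) (a * s)) //.
  + exact: gsc.
  + exact: LLM.
  + exact: SpZ.
  + by rewrite mulrDr mulrA.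
- move=> z hz; rewrite (epsP _ 0 z) //; [exact: LL0| by rewrite mul0r add0r].
- move=> _; rewrite (epsP _ 1 0) //; [exact: LL1| exact: Sp0| by rewrite mul1r addr0].
Qed.

Lemma ext_all l0 g : LinOn (Sp l0) g -> forall l, exists g',
  LinOn (Sp (l ++ l0)) g' /\ (forall z, Sp l0 z -> g' z = g z).
Proof.
move=> hg; elim=> [|m l [g1 [h1 a1]]]; first by exists g.
have [g2 [h2 [a2 _]]] := ext_step m h1.
exists g2; split => // z hz; rewrite a2 ?a1 //; exact: Sp_pre.
Qed.

Lemma construct (ms : seq K) t : (forall z, Sp ms z) -> ~ LL t ->
  exists D, Lin p e D /\ D t = 0 /\ D 1 = 1.
Proof.
move=> all nt.
have h0 : LinOn (Sp [:: 1]) id by split.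
have nt' : ~ Sp [:: 1] t.
  by move=> [c [s [hc [/= -> ht]]]]; apply: nt; rewrite ht mulr1 addr0.
have [g1 [h1 [a1 z1]]] := ext_step t h0.
have [g [hg ag]] := ext_all h1 ms.
have all' : forall z, Sp (ms ++ [:: t; 1]) z by move=> z; apply: Sp_cat.
exists g; split; [split|split].
- by move=> z w; apply: hg.1.
- move=> z x; apply: hg.2 => //; by exists z.
- rewrite ag ?z1 //; exists 1, 0; split; [exact: LL1| split; [exact: Sp0| by rewrite mul1r addr0]].
- have s1 : Sp [:: 1] 1.
    by exists 1, 0; split; [exact: LL1| split => //; rewrite mulr1 addr0].
  have s2 : Sp [:: t; 1] 1.
    by exists 0, 1; split; [exact: LL0| split => //; rewrite mul0r add0r].
  by rewrite ag // a1.
Qed.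

End Span.


Section Gen.
Variable K : fieldType.
Variable p : nat.
Hypothesis hp : p \in [pchar K].
Variable e : nat.
Local Notation Q := (p ^ e)%N.
Variable xs : seq K.
Local Notation r := (size xs).
Local Notation LL := (@LL K p e).
Local Notation IS := (@InSpan K p e xs).
Local Notation mono := (@mono K xs).
Implicit Types (a b c x z w : K).

Lemma mono0 : mono (fun _ => 0%N) = 1.
Proof. by rewrite /mono big1 // => i _; rewrite expr0. Qed.

Lemma monoM f g : mono f * mono g = mono (fun i => (f i + g i)%N).
Proof. by rewrite /mono -big_split; apply: eq_bigr => i _; rewrite exprD. Qed.

Lemma monoX (i : 'I_r) : mono (fun j => (j == i) : nat) = xs`_i.
Proof.
rewrite /mono (bigD1 i) //= eqxx expr1 big1 ?mulr1 // => j /negbTE -> ; by rewrite expr0.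
Qed.

Lemma IS0 : IS 0.
Proof. rewrite -(mul0r (mono (fun _ => 0%N))); constructor; exact: (LL0 hp). Qed.

Lemma ISL c : LL c -> IS c.
Proof. by move=> h; rewrite -(mulr1 c) -mono0; constructor. Qed.

Lemma ISZ a z : LL a -> IS z -> IS (a * z).
Proof.
move=> ha; elim=> [c f hc| u v _ hu _ hv].
  by rewrite mulrA; constructor; apply: LLM.
by rewrite mulrDr; constructor.
Qed.

Lemma ISM z w : IS z -> IS w -> IS (z * w).
Proof.
elim=> [c f hc| u v _ hu _ hv] hw; last by rewrite mulrDl; constructor; auto.
elim: hw => [c' g hc'| u v _ hu _ hv]; last by rewrite mulrDr; constructor.
rewrite mulrACA monoM; constructor; exact: LLM.
Qed.

Lemma ISN z : IS z -> IS (- z).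
Proof. by move=> h; rewrite -mulN1r; apply: ISZ h; apply: (LLN hp); exact: LL1. Qed.

Lemma ISX z n : IS z -> IS (z ^+ n).
Proof.
move=> h; elim: n => [|n IH]; first by rewrite expr0; apply: ISL; exact: LL1.
by rewrite exprS; apply: ISM.
Qed.

Lemma ISV z : IS z -> IS (z^-1).
Proof.
move=> h.
have -> : z^-1 = (z ^+ Q)^-1 * z ^+ (Q - 1).
  have hQ : Q = (Q - 1).+1 by rewrite subn1 prednK // (Q_gt0 hp).
  case: (eqVneq z 0) => [->|nz].
    by rewrite invr0 expr0n eqn0Ngt (Q_gt0 hp) /= invr0 mul0r.
  rewrite {1}hQ exprS invfM -mulrA mulVf ?mulr1 //.
  by rewrite expf_neq0.
apply: ISZ; last exact: ISX.
by apply: LLV; exists z.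
Qed.

Lemma fg_IS x : field_gen (@perfect_core K p) xs x -> IS x.
Proof.
elim=> {x}.
- move=> c hc; apply: ISL; have [y hy] := hc e; by exists y.
- move=> c hc; have ir : (index c xs < r)%N by rewrite index_mem.
  rewrite -(nth_index 0 hc) -(monoX (Ordinal ir)) -(mul1r (mono _)).
  constructor; exact: LL1.
- by move=> *; constructor.
- by move=> *; apply: ISN.
- by move=> *; apply: ISM.
- by move=> *; apply: ISV.
Qed.

Definition ms := [seq mono (fun i => nat_of_ord (f i)) | f : {ffun 'I_r -> 'I_Q} <- enum {ffun 'I_r -> 'I_Q}].

Lemma mono_red f : mono f = (mono (fun i => f i %/ Q)%N) ^+ Q * mono (fun i => f i %% Q)%N.
Proof.
rewrite /mono -prodrXl -big_split; apply: eq_bigr => i _ /=.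
by rewrite -exprM -exprD -divn_eq.
Qed.

Lemma IS_Sp z : IS z -> Sp p e ms z.
Proof.
elim=> [c f hc| u v _ hu _ hv]; last exact: (SpD hp).
rewrite mono_red mulrA.
pose f' := [ffun i => Ordinal (ltn_pmod (f i) (Q_gt0 hp e))] : {ffun 'I_r -> 'I_Q}.
have -> : mono (fun i => f i %% Q)%N = mono (fun i => nat_of_ord (f' i)).
  by apply: eq_bigr => i _; rewrite ffunE.
apply: (Sp_mem hp).
  by rewrite /ms; apply/mapP; exists f'; rewrite ?mem_enum.
by apply: LLM => //; exists (mono (fun i => f i %/ Q)%N).
Qed.

End Gen.


Section Main.
Variable K : fieldType.
Variable p : nat.
Hypothesis hp : p \in [pchar K].

Definition LinP (N : nat) (D : K -> K) :=
  forall b x, D (b ^+ (p ^ N) * x) = b ^+ (p ^ N) * D x.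

Lemma LinP_mono N N' D : (N <= N')%N -> LinP N D -> LinP N' D.
Proof.
move=> le h b x.
have -> : (p ^ N' = p ^ (N' - N) * p ^ N)%N by rewrite -expnD subnK.
by rewrite exprM h.
Qed.

Lemma fin_max m (P : nat -> 'I_m -> Prop) :
  (forall i n n', (n <= n')%N -> P n i -> P n' i) -> (forall i, exists n, P n i) ->
  exists N, forall i, P N i.
Proof.
move=> mon ex.
suff [N hN] : exists N, forall i, i \in enum 'I_m -> P N i.
  by exists N => i; apply: hN; rewrite mem_enum.
elim: (enum 'I_m) => [|j s [N hN]]; first by exists 0%N.
have [n hn] := ex j.
exists (maxn n N) => i; rewrite in_cons => /orP [/eqP ->|hi].
  by apply: mon hn; rewrite leq_maxl.
by apply: mon (hN i hi); rewrite leq_maxr.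
Qed.

Lemma alg_LinP N m (gens : 'I_m -> K -> K) E :
  (forall i, LinP N (gens i)) -> alg_gen gens E -> LinP N E.
Proof.
move=> hg; elim=> {E}.
- by move=> b c x; rewrite mulrCA.
- by [].
- by move=> D E _ hD _ hE b x; rewrite hD hE mulrDr.
- by move=> D E _ hD _ hE b x; rewrite hE hD.
Qed.

Lemma frob_inj n (u w : K) : u ^+ (p ^ n) = w ^+ (p ^ n) -> u = w.
Proof.
move=> h; apply/eqP; rewrite -subr_eq0.
have : (u - w) ^+ (p ^ n) == 0 by rewrite (frobB _ _ _ hp) h subrr.
by rewrite expf_eq0 => /andP [].
Qed.

Lemma all_pow : (forall u : K, exists z, z ^+ p = u) ->
  forall n (x : K), exists y, y ^+ (p ^ n) = x.
Proof.
move=> h; elim=> [|n IH] x; first by exists x; rewrite expn0 expr1.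
have [y hy] := IH x; have [z hz] := h y.
by exists z; rewrite expnS exprM hz.
Qed.

End Main.

Unset Implicit Arguments.
Set Strict Implicit.

Theorem mainTheorem16 (K : fieldType) (p : nat) :
  p \in [pchar K] ->
  fin_gen_ext (@perfect_core K p) ->
  (exists x : K, ~ @perfect_core K p x) ->
  ~ diff_fin_gen (@perfect_core K p).
Proof.
move=> hp [xs hxs] [x0 hx0] [m [gens [hg hall]]].
have p1 : (1 < p)%N by apply: prime_gt1; exact: (pcharf_prime hp).
have [N hN] : exists N, forall i, LinP p N (gens i).
  apply: fin_max; first by move=> i n n' le; apply: LinP_mono.
  move=> i; have [_ [n hn]] := hg i; exists n.
  move=> b x; apply: (lin_of_order hp hn); exact: ltn_expl.
have [u hu] : exists u : K, ~ exists z, z ^+ p = u.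
  apply: NNPP => hn; apply: hx0 => n.
  apply: all_pow => v; apply: NNPP => hv; apply: hn; by exists v.
pose t := u ^+ (p ^ N).
have nt : ~ LL p N.+1 t.
  move=> [z hz]; apply: hu; exists z.
  apply: (@frob_inj _ _ hp N); by rewrite -exprM -expnS -hz.
have allIS : forall z, InSpan p N.+1 xs z by move=> z; apply: (fg_IS hp); apply: hxs.
have [D [lD [Dt D1]]] := construct hp (fun z => IS_Sp hp (allIS z)) nt.
have dD : is_diffop (@perfect_core K p) D.
  split; last by exists (size xs * (p ^ N.+1 - 1))%N; apply: (order_bound hp lD allIS).
  split; first exact: lD.1.
  move=> c x hc; have [y <-] := hc N.+1; exact: lD.2.
have [E [aE eE]] := hall D dD.
have := alg_LinP hN aE u 1; rewrite mulr1 !eE -/t Dt D1 mulr1 => t0.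
apply: nt; exists 0; by rewrite -t0 expr0n eqn0Ngt expn_gt0 (prime_gt0 (pcharf_prime hp)).
Qed.
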